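(* Let $\ket{GHZ_3}=\frac{1}{\sqrt{3}}(\ket{000}+\ket{111}+\ket{222})\in\mathbb{C}^3\otimes\mathbb{C}^3\otimes\mathbb{C}^3$, shared among three parties $A,B,C$. Then for every normalized three-qubit pure state $\ket{\phi}\in\mathbb{C}^2\otimes\mathbb{C}^2\otimes\mathbb{C}^2$ (with the $i$-th qubit held by the $i$-th party), $\ket{GHZ_3}$ can be transformed into $\ket{\phi}$ by LOCC; i.e., $\ket{GHZ_3}$ is a common resource for the set of all three-qubit pure states.
   Context: An LOCC transformation is one implementable by local quantum operations of the three parties together with classical communication among them; ''$\ket{\psi}$ can be transformed into $\ket{\phi}$ by LOCC'' means there is such a protocol producing $\ket{\phi}$ from $\ket{\psi}$ with probability one (local embeddings of $\mathbb{C}^2$ into $\mathbb{C}^3$ are allowed, i.e. the output qubits are regarded as two-dimensional subspaces of the local spaces). A common resource for a set $S$ of states is a state that can be transformed by LOCC into every state of $S$. *)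

(* Defs.v *)
From mathcomp Require Import all_boot all_algebra.
From mathcomp Require Import reals complex.
Set Implicit Arguments. Unset Strict Implicit. Unset Printing Implicit Defensive.
Import GRing.Theory Num.Theory.
Local Open Scope ring_scope.
Local Open Scope complex_scope.

Section LOCC.
Variable R : realType.
Local Notation C := R[i].

(* Unnormalized vector of C^d ⊗ C^d ⊗ C^d, as coefficients in the product basis |a b c>. *)
Definition tri (d : nat) := 'I_d -> 'I_d -> 'I_d -> C.

Definition adj (m n : nat) (M : 'M[C]_(m, n)) : 'M[C]_(n, m) := (map_mx Num.conj M)^T.

Definition sqnorm d (psi : tri d) : C :=
  \sum_(a < d) \sum_(b < d) \sum_(c < d) psi a b c * (psi a b c)^*.

(* Operator M applied locally by party k (0 = A, 1 = B, 2 = C). *)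
Definition apply_local d (k : 'I_3) (M : 'M[C]_d) (psi : tri d) : tri d :=
  fun a b c =>
    if k == 0 then \sum_(l < d) M a l * psi l b c
    else if k == 1 then \sum_(l < d) M b l * psi a l c
    else \sum_(l < d) M c l * psi a b l.

Definition embed (VA VB VC : 'M[C]_(3, 2)) (phi : tri 2) : tri 3 :=
  fun i j k => \sum_(a < 2) \sum_(b < 2) \sum_(c < 2)
                 VA i a * VB j b * VC k c * phi a b c.

Definition isometry32 (V : 'M[C]_(3, 2)) : Prop := adj V *m V = 1%:M.

(* Complete set of Kraus operators of a local instrument on C^3 (one operator per
   outcome; arbitrary finite number of outcomes). *)
Definition kraus_complete (Ms : seq 'M[C]_3) : Prop :=
  \sum_(M <- Ms) adj M *m M = 1%:M.

(* locc_reach phi psi : starting from the (unnormalized, nonzero) tripartite state psi,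
   some finite-round LOCC protocol yields, with probability one, the three-qubit state
   phi (up to a global phase / the normalization of the branch and local embeddings
   C^2 -> C^3).  In each round one party performs a local measurement with Kraus
   operators Ms and announces the outcome; every outcome of nonzero probability must be
   continued by a protocol (which may depend on all previous outcomes). *)
Inductive locc_reach (phi : tri 2) : tri 3 -> Prop :=
| locc_done (psi : tri 3) (VA VB VC : 'M[C]_(3, 2)) (z : C) :
    isometry32 VA -> isometry32 VB -> isometry32 VC -> z != 0 ->
    psi = (fun i j k => z * embed VA VB VC phi i j k) ->
    locc_reach phi psi
| locc_step (psi : tri 3) (k : 'I_3) (Ms : seq 'M[C]_3) :
    kraus_complete Ms ->
    (forall M, M \in Ms -> sqnorm (apply_local k M psi) != 0 ->
                 locc_reach phi (apply_local k M psi)) ->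
    locc_reach phi psi.

Definition GHZ3 : tri 3 :=
  fun a b c => if (a == b) && (b == c) then ((Num.sqrt (3 : R))^-1)%:C else 0.

End LOCC.

(* Main.v *)
Require Import Defs.
From mathcomp Require Import all_boot all_algebra.
From mathcomp Require Import reals complex.
From Stdlib Require Import FunctionalExtensionality.
From mathcomp Require Import ring.
Import GRing.Theory Num.Theory.
Local Open Scope ring_scope.

Ltac ord3 x := let H := fresh "H" in case: x => [[|[|[|?]]] H] //.

Section Aux.
Variable R : realType.
Local Notation C := R[i].

Lemma funext3 d (f g : tri R d) : (forall a b c, f a b c = g a b c) -> f = g.
Proof.
move=> H; apply: functional_extensionality => a;
apply: functional_extensionality => b; apply: functional_extensionality => c; exact: H.
Qed.

Lemma sum_delta d (a : 'I_d) (f : 'I_d -> C) :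
  \sum_(l < d) (1%:M : 'M[C]_d) a l * f l = f a.
Proof.
rewrite (bigD1 a) //= big1 ?addr0; first by rewrite mxE eqxx mul1r.
by move=> l /negbTE nl; rewrite mxE eq_sym nl mul0r.
Qed.

Lemma apply_local_comp d k (A B : 'M[C]_d) (psi : tri R d) :
  apply_local k A (apply_local k B psi) = apply_local k (A *m B) psi.
Proof.
apply: funext3 => a b c; rewrite /apply_local.
case: (k == 0); [|case: (k == 1)];
 (under eq_bigr do rewrite mulr_sumr; rewrite exchange_big; apply: eq_bigr => l _;
  rewrite mxE mulr_suml; apply: eq_bigr => l' _; by rewrite mulrA).
Qed.

Lemma apply_local_id d k (psi : tri R d) : apply_local k 1%:M psi = psi.
Proof.
apply: funext3 => a b c; rewrite /apply_local.
by case: (k == 0); [|case: (k == 1)]; rewrite sum_delta.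
Qed.

Definition scale {d} (c : C) (psi : tri R d) : tri R d := fun a b e => c * psi a b e.

Lemma apply_local_scale d k (M : 'M[C]_d) (c : C) (psi : tri R d) :
  apply_local k M (scale c psi) = scale c (apply_local k M psi).
Proof.
apply: funext3 => a b e; rewrite /apply_local /scale.
by case: (k == 0); [|case: (k == 1)]; rewrite mulr_sumr; apply: eq_bigr => l _;
  rewrite mulrCA.
Qed.

Lemma sqnorm_scale d (c : C) (psi : tri R d) : sqnorm (scale c psi) = c * c^* * sqnorm psi.
Proof.
rewrite /sqnorm /scale !mulr_sumr; apply: eq_bigr => a _; rewrite mulr_sumr;
apply: eq_bigr => b _; rewrite mulr_sumr; apply: eq_bigr => e _.
by rewrite rmorphM /=; ring.
Qed.

Lemma reach_scale phi (psi : tri R 3) (c : C) : c != 0 -> locc_reach phi psi ->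
  locc_reach phi (scale c psi).
Proof.
move=> c0; elim => {psi}.
- move=> psi VA VB VC z HA HB HC z0 ->.
  apply: (@locc_done _ _ _ VA VB VC (c * z)) => //; first by rewrite mulf_neq0.
  by apply: funext3 => a b e; rewrite /scale mulrA.
- move=> psi k Ms Hk _ IH; apply: (locc_step (k:=k) Hk) => M HM.
  rewrite apply_local_scale sqnorm_scale => Hn; apply: IH => //.
  by apply: contraNneq Hn => ->; rewrite mulr0.
Qed.

Lemma reach_corr phi (X : tri R 3) k (U Q : 'M[C]_3) :
  adj U *m U = 1%:M -> U *m Q = 1%:M -> locc_reach phi X ->
  locc_reach phi (apply_local k Q X).
Proof.
move=> HU HUQ HX; apply: (locc_step (k:=k) (Ms:=[:: U])).
  by rewrite /kraus_complete big_cons big_nil addr0.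
by move=> M; rewrite inE => /eqP -> _; rewrite apply_local_comp HUQ apply_local_id.
Qed.

End Aux.


Section Tw.
Variable R : realType.
Local Notation C := R[i].

Definition sgn (b : bool) : C := if b then -1 else 1.
Definition sg3 (e1 e2 : bool) (i : nat) : C :=
  match i with 1 => sgn e1 | 2 => sgn e2 | _ => 1 end.
Definition Sd (e1 e2 : bool) : 'M[C]_3 :=
  \matrix_(i < 3, j < 3) if i == j then sg3 e1 e2 i else 0.

Lemma sgn_conj b : (sgn b)^* = sgn b.
Proof. by case: b; rewrite /sgn ?rmorphN rmorph1. Qed.
Lemma sg3_conj e1 e2 i : (sg3 e1 e2 i)^* = sg3 e1 e2 i.
Proof. by case: i => [|[|[|i]]]; rewrite /= ?sgn_conj ?rmorph1. Qed.

Lemma mulSd (M : 'M[C]_3) e1 e2 c j : (M *m Sd e1 e2) c j = M c j * sg3 e1 e2 j.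
Proof.
rewrite mxE (bigD1 j) //= big1 ?addr0; first by rewrite mxE eqxx.
by move=> l /negbTE nl; rewrite mxE nl mulr0.
Qed.

Lemma adjE m n (M : 'M[C]_(m, n)) i j : adj M i j = (M j i)^*.
Proof. by rewrite /adj !mxE. Qed.

Lemma mxZE m n (k : C) (A : 'M[C]_(m,n)) i j : (k *: A) i j = k * A i j.
Proof. by rewrite mxE. Qed.

Lemma mxDE m n (A B : 'M[C]_(m,n)) i j : (A + B) i j = A i j + B i j.
Proof. by rewrite mxE. Qed.

Lemma stw_entry (M : 'M[C]_3) (k : C) e1 e2 i j :
  (adj (k *: (M *m Sd e1 e2)) *m (k *: (M *m Sd e1 e2))) i j =
  k^* * k * (sg3 e1 e2 i * sg3 e1 e2 j) * (adj M *m M) i j.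
Proof.
rewrite !mxE mulr_sumr; apply: eq_bigr => c _.
rewrite !adjE !mxZE !mulSd rmorphM /= rmorphM /= sg3_conj; ring.
Qed.

Definition stw (M : 'M[C]_3) : seq 'M[C]_3 :=
  [seq (2^-1 : C) *: (M *m Sd e.1 e.2) | e <- [:: (false,false);(false,true);(true,false);(true,true)]].

Lemma sg3_sq e1 e2 i : sg3 e1 e2 i * sg3 e1 e2 i = 1.
Proof. by case: i => [|[|[|i]]]; rewrite /= ?mulr1 //; case: e1 => //; case: e2; rewrite /sgn /= ?mulrNN ?mulr1. Qed.

Lemma sg_sum {i j : nat} : (i < 3)%N -> (j < 3)%N -> i != j ->
  sg3 false false i * sg3 false false j + (sg3 false true i * sg3 false true j +
  (sg3 true false i * sg3 true false j + sg3 true true i * sg3 true true j)) = 0.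
Proof.
by case: i => [|[|[|i]]] //; case: j => [|[|[|j]]] //= _ _ _; rewrite /sgn; ring.
Qed.

Lemma stw_complete (M : 'M[C]_3) :
  (forall l, \sum_(c < 3) (M c l)^* * M c l = 1) -> kraus_complete (stw M).
Proof.
move=> H; rewrite /kraus_complete /stw /= !big_cons big_nil addr0.
apply/matrixP => i j; rewrite !mxDE !stw_entry [in RHS]mxE.
have -> : (2^-1 : C)^* = 2^-1 by rewrite rmorphV ?unitfE ?pnatr_eq0 // rmorph_nat.
have H2 : (2 : C) != 0 by rewrite pnatr_eq0.
have [<-|nij] := eqVneq i j.
  have Hd : (adj M *m M) i i = 1.
    rewrite mxE -(H i); apply: eq_bigr => c _; by rewrite adjE.
  by rewrite !sg3_sq Hd /=; field.
have := sg_sum (ltn_ord i) (ltn_ord j) nij.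
set q := (adj M *m M) i j => Hs.
rewrite /=; transitivity (2^-1 * 2^-1 * q * (sg3 false false i * sg3 false false j + (sg3 false true i * sg3 false true j +
  (sg3 true false i * sg3 true false j + sg3 true true i * sg3 true true j)))); first ring.
by rewrite Hs mulr0.
Qed.

End Tw.


Section Full.
Variable R : realType.
Local Notation C := R[i].

Definition Kn (n : nat -> C) (s : C) (m : nat) : 'M[C]_3 :=
  \matrix_(i < 3, l < 3) if (i == ((l + m) %% 3)%N :> nat) then s^-1 * n i else 0.

Lemma Kn_complete (n : nat -> C) (s : C) :
  (forall i, (n i)^* = n i) -> s^* = s -> s != 0 ->
  s * s = n 0%N * n 0%N + n 1%N * n 1%N + n 2%N * n 2%N ->
  kraus_complete [:: Kn n s 0; Kn n s 1; Kn n s 2].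
Proof.
move=> Hn Hs s0 Hss; rewrite /kraus_complete !big_cons big_nil addr0.
have Hsv : (s^-1)^* = s^-1.
  by rewrite fmorphV; congr (_^-1); exact: Hs.
apply/matrixP => i j; rewrite !mxDE !mxE.
rewrite !big_ord_recl !big_ord0 !adjE /Kn !mxE.
case: i => [[|[|[|i]]] Hi] //; case: j => [[|[|[|j]]] Hj] //=;
 rewrite ?rmorph0 ?rmorphM /= ?Hsv ?Hn. all: try (field; done).
all: rewrite /bump /=; transitivity ((n 0%N * n 0%N + n 1%N * n 1%N + n 2%N * n 2%N) / (s * s));
  [field; done | by rewrite -Hss divff ?mulf_neq0].
Qed.
End Full.


Arguments Sd {R}. Arguments sg3 {R}. Arguments sgn {R}. Arguments Kn {R}. Arguments stw {R}.
Arguments scale {R d}. Arguments stw_complete {R}.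
Section St.
Variable R : realType.
Local Notation C := R[i].


Lemma apply_local_comm (j k : 'I_3) (A B : 'M[C]_3) (psi : tri R 3) : j != k ->
  apply_local j A (apply_local k B psi) = apply_local k B (apply_local j A psi).
Proof.
move=> jk; apply: funext3 => a b c; rewrite /apply_local.
by move: jk; ord3 j; ord3 k; rewrite /= => _; under eq_bigr do rewrite mulr_sumr;
  rewrite exchange_big /=; apply: eq_bigr => l _; rewrite mulr_sumr;
  apply: eq_bigr => l' _; ring.
Qed.

Definition S1 (n : nat -> C) : tri R 3 :=
  fun a b c => if (a == b) && (b == c) then n a else 0.

Lemma S1_sym n e1 e2 : apply_local 0 (Sd e1 e2) (S1 n) = apply_local 2 (Sd e1 e2) (S1 n).
Proof.
apply: funext3 => a b c; rewrite /apply_local /S1 /Sd /=.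
rewrite !big_ord_recl !big_ord0 !mxE.
ord3 a; ord3 b; ord3 c; rewrite /= /bump /=; ring.
Qed.

Lemma SdSd e1 e2 : Sd e1 e2 *m Sd e1 e2 = 1%:M :> 'M[C]_3.
Proof.
apply/matrixP => i j; rewrite !mxE !big_ord_recl !big_ord0 !mxE.
by ord3 i; ord3 j; rewrite /= /bump /=; case: e1; case: e2; rewrite /sgn /=; ring.
Qed.

Lemma adjSd e1 e2 : adj (Sd e1 e2) = Sd e1 e2 :> 'M[C]_3.
Proof.
apply/matrixP => i j; rewrite adjE !mxE eq_sym.
by case: eqP => [->|_]; rewrite ?sg3_conj ?rmorph0.
Qed.

Lemma apply_local_scaleM d k (c : C) (A : 'M[C]_d) psi :
  apply_local k (c *: A) psi = scale c (apply_local k A psi).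
Proof.
apply: funext3 => a b e; rewrite /apply_local /scale.
by case: (k == 0); [|case: (k == 1)]; rewrite mulr_sumr; apply: eq_bigr => l _;
  rewrite mxE mulrA.
Qed.

Lemma sign_step phi (k : 'I_3) (M : 'M[C]_3) psi :
  (forall l, \sum_(c < 3) (M c l)^* * M c l = 1) ->
  (forall e1 e2, exists j1 j2 f1 f2 g1 g2, [/\ j1 != k, j2 != k &
       apply_local k (Sd e1 e2) psi = apply_local j1 (Sd f1 f2) (apply_local j2 (Sd g1 g2) psi)]) ->
  locc_reach phi (apply_local k M psi) -> locc_reach phi psi.
Proof.
move=> HM Hsym HR.
apply: (locc_step (k:=k) (stw_complete M HM)) => M'; rewrite /stw => /mapP [[e1 e2] _ ->] _.
have [j1 [j2 [f1 [f2 [g1 [g2 [n1 n2 E]]]]]]] := Hsym e1 e2.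
rewrite apply_local_scaleM -apply_local_comp E.
rewrite -(apply_local_comm _ _ _ _ _ n1) -(apply_local_comm _ _ _ _ _ n2).
rewrite -(@apply_local_scale _ _ j1) -(@apply_local_scale _ _ j2).
apply: (@reach_corr _ _ _ _ (Sd f1 f2)); rewrite ?adjSd ?SdSd //.
apply: (@reach_corr _ _ _ _ (Sd g1 g2)); rewrite ?adjSd ?SdSd //.
apply: reach_scale => //; by rewrite invr_eq0 pnatr_eq0.
Qed.
End St.


Arguments Sd {R}. Arguments sg3 {R}. Arguments sgn {R}. Arguments Kn {R}. Arguments stw {R}.
Arguments scale {R d}. Arguments stw_complete {R}. Arguments S1 {R}.

Section Ch.
Variable R : realType.
Local Notation C := R[i].


Definition ia (r : nat) : nat := if r == 2%N then 1%N else 0%N.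
Definition ib (r : nat) : nat := if r == 1%N then 1%N else 0%N.
Definition Xm : 'M[C]_3 := \matrix_(a < 3, l < 3) if (a == ia l :> nat) then 1 else 0.
Definition Ym : 'M[C]_3 := \matrix_(b < 3, l < 3) if (b == ib l :> nat) then 1 else 0.

Lemma Sdff k (psi : tri R 3) : apply_local k (Sd false false) psi = psi.
Proof.
have -> : Sd false false = 1%:M :> 'M[C]_3.
  by apply/matrixP => i j; rewrite !mxE; ord3 i; ord3 j.
exact: apply_local_id.
Qed.

Lemma Xm_col l : \sum_(c < 3) (Xm c l)^* * Xm c l = 1.
Proof. rewrite !big_ord_recl big_ord0 /Xm !mxE; ord3 l; rewrite /= ?rmorph0 ?rmorph1; ring. Qed.
Lemma Ym_col l : \sum_(c < 3) (Ym c l)^* * Ym c l = 1.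
Proof. rewrite !big_ord_recl big_ord0 /Ym !mxE; ord3 l; rewrite /= ?rmorph0 ?rmorph1; ring. Qed.

Lemma S2_sym n e1 e2 : apply_local 1 (Sd e1 e2) (apply_local 0 Xm (S1 n)) =
  apply_local 2 (Sd e1 e2) (apply_local 0 Xm (S1 n)).
Proof.
apply: funext3 => a b c; rewrite /apply_local /S1 /Sd /Xm /=.
rewrite !big_ord_recl !big_ord0 !mxE.
ord3 a; ord3 b; ord3 c; rewrite /= /bump /ia /=; ring.
Qed.

Lemma S3_sym n e1 e2 : apply_local 2 (Sd e1 e2) (apply_local 1 Ym (apply_local 0 Xm (S1 n))) =
  apply_local 0 (Sd e2 false) (apply_local 1 (Sd e1 false) (apply_local 1 Ym (apply_local 0 Xm (S1 n)))).
Proof.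
apply: funext3 => a b c; rewrite /apply_local /S1 /Sd /Xm /Ym /=.
rewrite !big_ord_recl !big_ord0 !mxE.
ord3 a; ord3 b; ord3 c; rewrite /= /bump /ia /ib /=; ring.
Qed.

End Ch.


Arguments Sd {R}. Arguments sg3 {R}. Arguments sgn {R}. Arguments Kn {R}. Arguments stw {R}.
Arguments scale {R d}. Arguments stw_complete {R}. Arguments S1 {R}.

Section Al.
Variable R : realType.
Local Notation C := R[i].


Definition Pm (m : nat) : 'M[C]_3 :=
  \matrix_(i < 3, l < 3) if (i == ((l + m) %% 3)%N :> nat) then 1 else 0.

Lemma Pm_unit m : (m < 3)%N -> adj (Pm m) *m Pm m = 1%:M /\ Pm m *m (Pm m)^T = 1%:M.
Proof.
move=> Hm; split; apply/matrixP => i j; rewrite !mxE !big_ord_recl !big_ord0 ?adjE /Pm !mxE;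
 (case: m Hm => [|[|[|m]]] // _; ord3 i; ord3 j; rewrite /= ?rmorph0 ?rmorph1; ring).
Qed.

Definition gh : C := ((Num.sqrt (3 : R))^-1)%:C%C.

Lemma gh_neq0 : gh != 0.
Proof.
have H3 : (Num.sqrt (3:R))^-1 != 0 by rewrite invr_eq0 sqrtr_eq0 lern0.
by rewrite /gh; apply/eqP; case => H; rewrite H eqxx in H3.
Qed.

Lemma alice_branch n s m : (m < 3)%N ->
  apply_local 0 (Kn n s m) (GHZ3 R) =
  scale (s^-1 * gh) (apply_local 1 (Pm m)^T (apply_local 2 (Pm m)^T (S1 n))).
Proof.
move=> Hm; apply: funext3 => a b c; rewrite /apply_local /S1 /Kn /GHZ3 /scale /Pm /=.
rewrite !big_ord_recl !big_ord0 !mxE.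
case: m Hm => [|[|[|m]]] // _; ord3 a; ord3 b; ord3 c; rewrite /= /bump /= -/gh; ring.
Qed.


Lemma alice_step phi (n : nat -> C) (s : C) :
  (forall i, (n i)^* = n i) -> s^* = s -> s != 0 ->
  s * s = n 0%N * n 0%N + n 1%N * n 1%N + n 2%N * n 2%N ->
  locc_reach phi (S1 n) -> locc_reach phi (GHZ3 R).
Proof.
move=> Hn Hs s0 Hss HR.
apply: (locc_step (k:=0) (@Kn_complete _ n s Hn Hs s0 Hss)) => M.
have Hm : forall m, (m < 3)%N -> locc_reach phi (apply_local 0 (Kn n s m) (GHZ3 R)).
  move=> m Hm; rewrite (alice_branch n s m Hm); have [H1 H2] := Pm_unit m Hm.
  apply: reach_scale; first by rewrite mulf_neq0 ?invr_eq0 ?gh_neq0.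
  apply: (@reach_corr _ _ _ _ (Pm m)) => //.
  by apply: (@reach_corr _ _ _ _ (Pm m)).
by rewrite !inE => /or3P [/eqP->|/eqP->|/eqP->] _; apply: Hm.
Qed.
End Al.


Arguments Sd {R}. Arguments sg3 {R}. Arguments sgn {R}. Arguments Kn {R}. Arguments stw {R}.
Arguments scale {R d}. Arguments stw_complete {R}. Arguments S1 {R}. Arguments Xm {R}. Arguments Ym {R}.

Section Chain.
Variable R : realType.
Local Notation C := R[i].

Lemma chain phi (n : nat -> C) (s : C) (W : 'M[C]_3) :
  (forall i, (n i)^* = n i) -> s^* = s -> s != 0 ->
  s * s = n 0%N * n 0%N + n 1%N * n 1%N + n 2%N * n 2%N ->
  (forall l, \sum_(c < 3) (W c l)^* * W c l = 1) ->
  locc_reach phi (apply_local 2 W (apply_local 1 Ym (apply_local 0 Xm (S1 n)))) ->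
  locc_reach phi (GHZ3 R).
Proof.
move=> Hn Hs s0 Hss HW HR.
apply: (@alice_step R phi n s Hn Hs s0 Hss).
apply: (@sign_step R phi 0 Xm _ (@Xm_col R)).
  move=> e1 e2; exists 2, 2, e1, e2, false, false; split => //.
  by rewrite Sdff S1_sym.
apply: (@sign_step R phi 1 Ym _ (@Ym_col R)).
  move=> e1 e2; exists 2, 2, e1, e2, false, false; split => //.
  by rewrite Sdff S2_sym.
apply: (@sign_step R phi 2 W _ HW).
  move=> e1 e2; exists 0, 1, e2, false, e1, false; split => //.
  by rewrite S3_sym.
exact: HR.
Qed.
End Chain.


Arguments Sd {R}. Arguments sg3 {R}. Arguments sgn {R}. Arguments Kn {R}. Arguments stw {R}.
Arguments scale {R d}. Arguments stw_complete {R}. Arguments S1 {R}. Arguments Xm {R}. Arguments Ym {R}.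

Section Fin.
Variable R : realType.
Local Notation C := R[i].

Lemma S3E (n : nat -> C) a b l :
  apply_local 1 Ym (apply_local 0 Xm (S1 n)) a b l =
  if (a == ia l :> nat) && (b == ib l :> nat) then n l else 0.
Proof.
rewrite /apply_local /S1 /Xm /Ym /=.
rewrite !big_ord_recl !big_ord0 !mxE.
ord3 a; ord3 b; ord3 l; rewrite /= /bump /ia /ib /=; ring.
Qed.

Variables (phi : tri R 2) (UA UB : 'M[C]_2).

Definition psi2 : tri R 2 := apply_local 0 UA (apply_local 1 UB phi).
Definition phin (a b c : nat) : C := psi2 (inord a) (inord b) (inord c).
Definition pv (r c : nat) : C := if (c < 2)%N then phin (ia r) (ib r) c else 0.
Definition nn (r : nat) : C := sqrtC (pv r 0 * (pv r 0)^* + pv r 1 * (pv r 1)^*).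
Definition ss : C := sqrtC (nn 0 * nn 0 + nn 1 * nn 1 + nn 2 * nn 2).
Definition Wm : 'M[C]_3 := \matrix_(c < 3, l < 3)
  if nn l == 0 then (if c == 0 :> nat then 1 else 0) else pv l c / nn l.
Definition VA3 (U : 'M[C]_2) : 'M[C]_(3,2) :=
  \matrix_(i < 3, j < 2) if (i < 2)%N then U (inord i) j else 0.
Definition VC3 : 'M[C]_(3,2) := \matrix_(i < 3, j < 2) if (i == j :> nat) then 1 else 0.

Lemma nn_ge0 r : 0 <= nn r.
Proof. by rewrite sqrtC_ge0 addr_ge0 ?mul_conjC_ge0. Qed.
Lemma nn_conj r : (nn r)^* = nn r.
Proof. exact: geC0_conj (nn_ge0 r). Qed.
Lemma nn_sq r : nn r * nn r = pv r 0 * (pv r 0)^* + pv r 1 * (pv r 1)^*.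
Proof. by rewrite -expr2 sqrtCK. Qed.

Lemma pv_zero r : nn r = 0 -> forall c, pv r c = 0.
Proof.
move=> H0 c.
have : pv r 0 * (pv r 0)^* + pv r 1 * (pv r 1)^* == 0 by rewrite -nn_sq H0 mulr0.
rewrite paddr_eq0 ?mul_conjC_ge0 // !mul_conjC_eq0 => /andP [/eqP p0 /eqP p1].
by case: c => [|[|c]] //; rewrite /pv.
Qed.

Lemma Wn (c l : 'I_3) : Wm c l * nn l = pv l c.
Proof.
rewrite mxE; case: eqP => [H0|H0]; first by rewrite H0 mulr0 pv_zero.
by rewrite mulfVK //; apply/eqP.
Qed.

Lemma Wcol (l : 'I_3) : \sum_(c < 3) (Wm c l)^* * Wm c l = 1.
Proof.
rewrite !big_ord_recl big_ord0 !mxE /=.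
case: eqP => [H0|H0]; first by rewrite /= ?rmorph0 ?rmorph1; ring.
rewrite /pv /= !fmorph_div /= nn_conj rmorph0.
transitivity ((pv l 0 * (pv l 0)^* + pv l 1 * (pv l 1)^*) / (nn l * nn l)).
  rewrite /pv /=; field; by apply/eqP.
by rewrite -nn_sq divff // mulf_neq0 //; apply/eqP.
Qed.


Lemma VC_sum (c : 'I_3) (F : 'I_2 -> C) :
  \sum_(c' < 2) VC3 c c' * F c' = if (c < 2)%N then F (inord c) else 0.
Proof.
case: ifP => Hc.
  rewrite (bigD1 (inord c)) //= mxE inordK // eqxx mul1r big1 ?addr0 // => c' Hc'.
  rewrite mxE; case: eqP => [E|_]; last by rewrite mul0r.
  by exfalso; move/negP: Hc'; apply; apply/eqP/val_inj; rewrite /= inordK.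
rewrite big1 // => c' _; rewrite mxE; case: eqP => [E|_]; last by rewrite mul0r.
by move: (ltn_ord c'); rewrite -E Hc.
Qed.

Lemma VA_sum (U : 'M[C]_2) (a : 'I_3) (F : 'I_2 -> C) :
  \sum_(a' < 2) VA3 U a a' * F a' = if (a < 2)%N then \sum_(a' < 2) U (inord a) a' * F a' else 0.
Proof.
case: ifP => Ha; first by apply: eq_bigr => a' _; rewrite mxE Ha.
by rewrite big1 // => a' _; rewrite mxE Ha mul0r.
Qed.

Lemma embedE a b c : embed (VA3 UA) (VA3 UB) VC3 phi a b c =
  if [&& (a < 2)%N, (b < 2)%N & (c < 2)%N] then phin a b c else 0.
Proof.
rewrite /embed.
transitivity (\sum_(a' < 2) VA3 UA a a' * \sum_(b' < 2) VA3 UB b b' *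
                \sum_(c' < 2) VC3 c c' * phi a' b' c').
  apply: eq_bigr => a' _; rewrite mulr_sumr; apply: eq_bigr => b' _.
  rewrite mulr_sumr mulr_sumr; apply: eq_bigr => c' _; ring.
rewrite VA_sum; under eq_bigr do rewrite VA_sum; under eq_bigr do under eq_bigr do rewrite VC_sum.
case Ha: (a < 2)%N => //=; case Hb: (b < 2)%N => /=;
  last by rewrite big1 // => *; rewrite mulr0.
case Hc: (c < 2)%N => /=;
  last by rewrite big1 // => *; rewrite big1 ?mulr0 // => *; rewrite mulr0.
by rewrite /phin /psi2 /apply_local /=.
Qed.


Lemma inord0_2 : (inord 0 : 'I_2) = ord0.
Proof. by apply: val_inj; rewrite /= inordK. Qed.
Lemma inord1_2 : (inord 1 : 'I_2) = lift ord0 ord0.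
Proof. by apply: val_inj; rewrite /= inordK. Qed.

Lemma VA3_iso (U : 'M[C]_2) : adj U *m U = 1%:M -> isometry32 (VA3 U).
Proof.
move=> HU; rewrite /isometry32; apply/matrixP => i j.
rewrite -[in RHS]HU !mxE !big_ord_recl !big_ord0 !adjE !mxE /=.
rewrite inord0_2 inord1_2 rmorph0 ?mul0r ?addr0 //.
Qed.

Lemma VC3_iso : isometry32 VC3.
Proof.
rewrite /isometry32; apply/matrixP => i j.
rewrite !mxE !big_ord_recl !big_ord0 !adjE !mxE /=.
case: i => [[|[|i]] Hi] //; case: j => [[|[|j]] Hj] //=; rewrite ?rmorph0 ?rmorph1; ring.
Qed.


Lemma Wif (c l : 'I_3) (b : bool) : Wm c l * (if b then nn l else 0) = if b then pv l c else 0.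
Proof. by case: b; rewrite ?Wn ?mulr0. Qed.

Lemma S4E : (phin 1 1 0 = 0) -> (phin 1 1 1 = 0) ->
  apply_local 2 Wm (apply_local 1 Ym (apply_local 0 Xm (S1 nn))) =
  (fun a b c => 1 * embed (VA3 UA) (VA3 UB) VC3 phi a b c).
Proof.
move=> H0 H1; apply: funext3 => a b c.
change (\sum_(l < 3) Wm c l * apply_local 1 Ym (apply_local 0 Xm (S1 nn)) a b l = 1 * embed (VA3 UA) (VA3 UB) VC3 phi a b c).
under eq_bigr do rewrite S3E Wif.
rewrite embedE mul1r !big_ord_recl big_ord0 /=.
ord3 a; ord3 b; ord3 c; rewrite /= /bump /pv /ia /ib /= ?H0 ?H1; ring.
Qed.

Lemma ss_conj : ss^* = ss.
Proof. by apply: geC0_conj; rewrite sqrtC_ge0 !addr_ge0 // mulr_ge0 // nn_ge0. Qed.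
Lemma ss_sq : ss * ss = nn 0 * nn 0 + nn 1 * nn 1 + nn 2 * nn 2.
Proof. by rewrite -expr2 sqrtCK. Qed.


Lemma apply_local0 d k (M : 'M[C]_d) : apply_local k M (fun _ _ _ => 0) = (fun _ _ _ => 0).
Proof.
apply: funext3 => a b c; rewrite /apply_local.
by case: (k == 0); [|case: (k == 1)]; rewrite big1 // => *; rewrite mulr0.
Qed.

Lemma ss_neq0 : adj UA *m UA = 1%:M -> adj UB *m UB = 1%:M ->
  phin 1 1 0 = 0 -> phin 1 1 1 = 0 -> sqnorm phi = 1 -> ss != 0.
Proof.
move=> HUA HUB H0 H1 Hn; apply/negP => /eqP H.
have : nn 0 * nn 0 + nn 1 * nn 1 + nn 2 * nn 2 == 0 by rewrite -ss_sq H mulr0.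
have g r : 0 <= nn r * nn r by rewrite mulr_ge0 // nn_ge0.
rewrite paddr_eq0 ?addr_ge0 // paddr_eq0 // !mulf_eq0 !orbb => /andP [/andP [/eqP n0 /eqP n1] /eqP n2].
have Hpsi : psi2 = (fun _ _ _ => 0).
  apply: funext3 => a b c.
  have -> : psi2 a b c = phin a b c by rewrite /phin !inord_val.
  case: a => [[|[|a]] Ha] //; case: b => [[|[|b]] Hb] //; case: c => [[|[|c]] Hc] //=.
  - by have := pv_zero 0 n0 0; rewrite /pv.
  - by have := pv_zero 0 n0 1; rewrite /pv.
  - by have := pv_zero 1 n1 0; rewrite /pv.
  - by have := pv_zero 1 n1 1; rewrite /pv.
  - by have := pv_zero 2 n2 0; rewrite /pv.
  - by have := pv_zero 2 n2 1; rewrite /pv.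
have Hphi : phi = apply_local 1 (adj UB) (apply_local 0 (adj UA) (psi2)).
  by rewrite /psi2 apply_local_comp HUA apply_local_id apply_local_comp HUB apply_local_id.
move: Hn; rewrite Hphi Hpsi !apply_local0 /sqnorm.
rewrite big1 => [/esym/eqP|*]; first by rewrite oner_eq0.
by rewrite big1 // => *; rewrite big1 // => *; rewrite mul0r.
Qed.

End Fin.


Section Dec.
Variable R : realType.
Local Notation C := R[i].

Lemma normalize2 (x0 x1 : C) : (x0 != 0) || (x1 != 0) ->
  exists k : C, k != 0 /\ (k * x0) * (k * x0)^* + (k * x1) * (k * x1)^* = 1.
Proof.
move=> Hx; set N := x0 * x0^* + x1 * x1^*.
have N0 : N != 0.
  by rewrite /N paddr_eq0 ?mul_conjC_ge0 // !mul_conjC_eq0 negb_and.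
have Nge : 0 <= N by rewrite addr_ge0 ?mul_conjC_ge0.
have sN0 : sqrtC N != 0 by rewrite sqrtC_eq0.
exists (sqrtC N)^-1; split; first by rewrite invr_eq0.
have kc : ((sqrtC N)^-1)^* = (sqrtC N)^-1.
  by apply: geC0_conj; rewrite invr_ge0 sqrtC_ge0.
rewrite !rmorphM /= kc.
have sq : sqrtC N * sqrtC N = N by rewrite -expr2 sqrtCK.
transitivity (N / (sqrtC N * sqrtC N)); first by rewrite /N; field.
by rewrite sq divff.
Qed.

Lemma quad_root (A B Cq : C) : A != 0 -> exists t : C, A * t ^+ 2 + B * t + Cq = 0.
Proof.
move=> A0; set D := B ^+ 2 - 4 * A * Cq.
have HD : sqrtC D ^+ 2 = D by rewrite sqrtCK.
exists ((- B + sqrtC D) / (2 * A)).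
have H2 : (2 : C) != 0 by rewrite pnatr_eq0.
transitivity ((sqrtC D ^+ 2 - D) / (4 * A)).
  by rewrite /D; field.
by rewrite sqrtCK subrr mul0r.
Qed.


Lemma kernel2 (m00 m01 m10 m11 : C) : m00 * m11 - m01 * m10 = 0 ->
  exists y0 y1 : C, ((y0 != 0) || (y1 != 0)) /\ m00 * y0 + m01 * y1 = 0 /\ m10 * y0 + m11 * y1 = 0.
Proof.
move=> Hd.
case: (eqVneq m00 0) => [z00|nz00].
  case: (eqVneq m01 0) => [z01|nz01].
    case: (eqVneq m10 0) => [z10|nz10].
      case: (eqVneq m11 0) => [z11|nz11].
        by exists 1, 0; rewrite z00 z01 z10 z11 oner_eq0 /=; split => //; split; ring.
      exists m11, (- m10); rewrite nz11 /=; split => //; split; rewrite ?z00 ?z01; ring.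
    exists m11, (- m10); rewrite oppr_eq0 nz10 orbT; split => //; split; rewrite ?z00 ?z01; ring.
  exists (- m01), m00; rewrite oppr_eq0 nz01 /=; split => //; split; first ring.
  by rewrite -Hd; ring.
exists (- m01), m00; rewrite nz00 orbT; split => //; split; first ring.
by rewrite -Hd; ring.
Qed.

Definition detq (f : nat -> nat -> nat -> C) (x0 x1 : C) : C :=
  (x0 * f 0%N 0%N 0%N + x1 * f 1%N 0%N 0%N) * (x0 * f 0%N 1%N 1%N + x1 * f 1%N 1%N 1%N) -
  (x0 * f 0%N 1%N 0%N + x1 * f 1%N 1%N 0%N) * (x0 * f 0%N 0%N 1%N + x1 * f 1%N 0%N 1%N).

Lemma alpha_exists f : exists x0 x1 : C, ((x0 != 0) || (x1 != 0)) /\ detq f x0 x1 = 0.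
Proof.
set A := f 0%N 0%N 0%N * f 0%N 1%N 1%N - f 0%N 1%N 0%N * f 0%N 0%N 1%N.
case: (eqVneq A 0) => [A0|nA0].
  exists 1, 0; rewrite oner_eq0; split => //; rewrite /detq; transitivity A; [rewrite /A; ring | exact A0].
set B := f 0%N 0%N 0%N * f 1%N 1%N 1%N + f 1%N 0%N 0%N * f 0%N 1%N 1%N
       - f 0%N 1%N 0%N * f 1%N 0%N 1%N - f 1%N 1%N 0%N * f 0%N 0%N 1%N.
set Cq := f 1%N 0%N 0%N * f 1%N 1%N 1%N - f 1%N 1%N 0%N * f 1%N 0%N 1%N.
have [t Ht] := quad_root A B Cq nA0.
exists t, 1; rewrite oner_eq0 orbT; split => //; rewrite /detq; transitivity (A * t ^+ 2 + B * t + Cq); [rewrite /A /B /Cq; ring | exact Ht].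
Qed.

Lemma ab_exists f : exists a0 a1 b0 b1 : C,
  [/\ a0 * a0^* + a1 * a1^* = 1, b0 * b0^* + b1 * b1^* = 1 &
   forall c, c = 0%N \/ c = 1%N ->
     a0 * (b0 * f 0%N 0%N c + b1 * f 0%N 1%N c) + a1 * (b0 * f 1%N 0%N c + b1 * f 1%N 1%N c) = 0].
Proof.
have [x0 [x1 [nx Hx]]] := alpha_exists f.
have [y0 [y1 [ny [Hy0 Hy1]]]] := kernel2 (x0 * f 0%N 0%N 0%N + x1 * f 1%N 0%N 0%N)
  (x0 * f 0%N 1%N 0%N + x1 * f 1%N 1%N 0%N) (x0 * f 0%N 0%N 1%N + x1 * f 1%N 0%N 1%N)
  (x0 * f 0%N 1%N 1%N + x1 * f 1%N 1%N 1%N) Hx.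
have [k [k0 Hk]] := normalize2 x0 x1 nx.
have [k' [k'0 Hk']] := normalize2 y0 y1 ny.
exists (k * x0), (k * x1), (k' * y0), (k' * y1); split => // c [->|->].
  transitivity (k * k' * ((x0 * f 0%N 0%N 0%N + x1 * f 1%N 0%N 0%N) * y0 +
               (x0 * f 0%N 1%N 0%N + x1 * f 1%N 1%N 0%N) * y1)); first ring.
  by rewrite Hy0 mulr0.
transitivity (k * k' * ((x0 * f 0%N 0%N 1%N + x1 * f 1%N 0%N 1%N) * y0 +
             (x0 * f 0%N 1%N 1%N + x1 * f 1%N 1%N 1%N) * y1)); first ring.
by rewrite Hy1 mulr0.
Qed.

End Dec.


Arguments Sd {R}. Arguments sg3 {R}. Arguments sgn {R}. Arguments Kn {R}. Arguments stw {R}.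
Arguments scale {R d}. Arguments stw_complete {R}. Arguments S1 {R}. Arguments Xm {R}. Arguments Ym {R}. Arguments phin {R}. Arguments ab_exists {R}.

Section Fin2.
Variable R : realType.
Local Notation C := R[i].

Definition Uof (a0 a1 : C) : 'M[C]_2 := \matrix_(i < 2, j < 2)
  if i == 0 :> nat then (if j == 0 :> nat then a1^* else - a0^*) else (if j == 0 :> nat then a0 else a1).

Lemma Uof_unit a0 a1 : a0 * a0^* + a1 * a1^* = 1 -> adj (Uof a0 a1) *m Uof a0 a1 = 1%:M.
Proof.
move=> H; apply/matrixP => i j; rewrite !mxE !big_ord_recl !big_ord0 !adjE !mxE /=.
case: i => [[|[|i]] Hi] //; case: j => [[|[|j]] Hj] //=; rewrite ?rmorphN ?conjCK /=.
- by rewrite addr0 addrC [a0^* * _]mulrC.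
- by rewrite addr0 mulrN mulrC addNr.
- by rewrite addr0 mulNr conjCK [a0 * _]mulrC addNr.
- by rewrite addr0 mulrNN conjCK [a1^* * _]mulrC.
Qed.

Definition o2 (n : nat) : 'I_2 := if n == 0%N then ord0 else lift ord0 ord0.

Lemma dec (phi : tri R 2) : exists UA UB : 'M[C]_2,
  [/\ adj UA *m UA = 1%:M, adj UB *m UB = 1%:M,
      phin phi UA UB 1 1 0 = 0 & phin phi UA UB 1 1 1 = 0].
Proof.
have [a0 [a1 [b0 [b1 [Ha Hb Hf]]]]] := ab_exists (fun a b c => phi (o2 a) (o2 b) (o2 c)).
exists (Uof a0 a1), (Uof b0 b1); split; try exact: Uof_unit.
- have := Hf 0%N (or_introl erefl).
  rewrite /phin /psi2 /apply_local /= inord0_2 inord1_2 !big_ord_recl !big_ord0 /Uof !mxE /=.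
  move=> Hz; etransitivity; last exact Hz; rewrite /o2 /=; ring.
- have := Hf 1%N (or_intror erefl).
  rewrite /phin /psi2 /apply_local /= inord1_2 !big_ord_recl !big_ord0 /Uof !mxE /=.
  move=> Hz; etransitivity; last exact Hz; rewrite /o2 /=; ring.
Qed.

End Fin2.


Theorem theorem2 (R : realType) (phi : tri R 2) :
  sqnorm phi = 1 -> locc_reach phi (GHZ3 R).
Proof.
move=> Hn.
have [UA [UB [HA HB H0 H1]]] := dec R phi.
apply: (@chain R phi (nn R phi UA UB) (ss R phi UA UB) (Wm R phi UA UB)).
- exact: nn_conj.
- exact: ss_conj.
- exact: ss_neq0.
- exact: ss_sq.
- exact: Wcol.
rewrite S4E //.
apply: (@locc_done _ _ _ (VA3 R UA) (VA3 R UB) (VC3 R) 1) => //.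
- exact: VA3_iso.
- exact: VA3_iso.
- exact: VC3_iso.
- exact: oner_neq0.
Qed.
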